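(* Let $\mathbb{K}$ be a field of characteristic $0$. Suppose that $\mathcal{A}$ is a $2n$-dimensional Poincaré CDGA over $\mathbb{K}$ which is formal and connected. Let $\omega\in\mathcal{A}^{2n}$ be such that $[\omega]$ is the dual of the Poincaré class. Let $\theta$ be a new element of degree $2n-1$ and $\mathcal{A}_\theta=\mathcal{A}\otimes\Lambda\theta$ with $d\theta=\omega$. If $\mathcal{A}_\theta$ is formal, then $H^*(\mathcal{A})\cong\mathbb{K}[x]/(x^p)$ is a quotient of the polynomial ring in a single (homogeneous) variable.
   Context: A finite-dimensional graded commutative algebra $H$ is $m$-dimensional Poincaré if there exists $\alpha_H\in(H^m)^\vee$ (the Poincaré class) such that $H^i\to(H^{m-i})^\vee$, $x\mapsto(y\mapsto\alpha_H(xy))$, is an isomorphism for all $i$; a CDGA is Poincaré if its cohomology is. The dual of the Poincaré class is the top-degree class $c$ with $\alpha_H(c)=1$. Connected means $H^0(\mathcal{A})=\mathbb{K}$ (with $\mathcal{A}$ non-negatively graded). $\mathcal{A}_\theta=\{x+\theta y:x,y\in\mathcal{A}\}$. A CDGA is formal if it is connected to its cohomology by a zigzag of quasi-isomorphisms. *)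

(* Defs.v *)
From HB Require Import structures.
From mathcomp Require Import all_boot all_algebra.
Set Implicit Arguments. Unset Strict Implicit. Unset Printing Implicit Defensive.
Import GRing.Theory.
Local Open Scope ring_scope.

(* The underlying vector space is the direct sum of the homogeneous pieces
   [deg i]; [par] is the parity involution x_i |-> (-1)^i x_i (it is
   determined by the grading, cf. the axioms below). *)
Record rcdga (K : fieldType) := RCdga {
  car :> lmodType K;
  deg : nat -> car -> Prop;
  mul : car -> car -> car;
  one : car;
  dif : car -> car;
  par : car -> car
}.

Arguments deg {K} r _ _.
Arguments mul {K} r _ _.
Arguments one {K} r.
Arguments dif {K} r _.
Arguments par {K} r _.

Section Defs.
Variable K : fieldType.

Definition lin_fun (V W : lmodType K) (f : V -> W) : Prop :=
  forall (a : K) (x y : V), f (a *: x + y) = a *: f x + f y.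

Definition is_cdga (A : rcdga K) : Prop :=
  (forall i, deg A i 0 /\
     forall (a : K) (x y : A), deg A i x -> deg A i y -> deg A i (a *: x + y)) /\
  (forall x : A, exists (N : nat) (f : nat -> A),
      (forall i, deg A i (f i)) /\ x = \sum_(i < N) f i) /\
  (forall (N : nat) (f : nat -> A), (forall i, deg A i (f i)) ->
      \sum_(i < N) f i = 0 -> forall i, (i < N)%N -> f i = 0) /\
  (forall x : A, lin_fun (mul A x)) /\
  (forall y : A, lin_fun (fun x => mul A x y)) /\
  (forall x y z : A, mul A x (mul A y z) = mul A (mul A x y) z) /\
  (forall x : A, mul A (one A) x = x /\ mul A x (one A) = x) /\
  deg A 0 (one A) /\
  (forall i j (x y : A), deg A i x -> deg A j y -> deg A (i + j) (mul A x y)) /\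
  (forall i j (x y : A), deg A i x -> deg A j y ->
      mul A y x = (-1) ^+ (i * j) *: mul A x y) /\
  lin_fun (par A) /\
  (forall i (x : A), deg A i x -> par A x = (-1) ^+ i *: x) /\
  lin_fun (dif A) /\
  (forall i (x : A), deg A i x -> deg A i.+1 (dif A x)) /\
  (forall x : A, dif A (dif A x) = 0) /\
  (forall i (x y : A), deg A i x ->
      dif A (mul A x y) = mul A (dif A x) y + (-1) ^+ i *: mul A x (dif A y)).

Definition cocycle (A : rcdga K) (i : nat) (x : A) : Prop :=
  deg A i x /\ dif A x = 0.
Definition exact (A : rcdga K) (x : A) : Prop := exists c : A, x = dif A c.

(* CDGA morphisms and quasi-isomorphisms (f induces an isomorphism
   H^i(A) -> H^i(B) for every i). *)
Definition cdga_morph (A B : rcdga K) (f : A -> B) : Prop :=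
  lin_fun f /\ f (one A) = one B /\
  (forall x y : A, f (mul A x y) = mul B (f x) (f y)) /\
  (forall i (x : A), deg A i x -> deg B i (f x)) /\
  (forall x : A, f (dif A x) = dif B (f x)).

Definition quasi_iso (A B : rcdga K) (f : A -> B) : Prop :=
  cdga_morph f /\
  forall i,
    (forall b : B, cocycle i b -> exists a : A, cocycle i a /\ exact (b - f a)) /\
    (forall a : A, cocycle i a -> exact (f a) -> exact a).

Inductive zigzag : rcdga K -> rcdga K -> Prop :=
| zz_refl (A : rcdga K) : is_cdga A -> zigzag A A
| zz_fwd (A B C : rcdga K) (f : A -> B) :
    is_cdga A -> is_cdga B -> quasi_iso f -> zigzag B C -> zigzag A C
| zz_bwd (A B C : rcdga K) (f : B -> A) :
    is_cdga A -> is_cdga B -> quasi_iso f -> zigzag B C -> zigzag A C.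

(* formal: weakly equivalent (zigzag of quasi-isos) to a CDGA with zero
   differential (equivalently, to its cohomology). *)
Definition formal (A : rcdga K) : Prop :=
  exists H : rcdga K, is_cdga H /\ (forall x : H, dif H x = 0) /\ zigzag A H.

(* connected: H^0(A) = K, i.e. the unit K -> H^0(A) is an isomorphism *)
Definition connected (A : rcdga K) : Prop :=
  ~ exact (one A) /\
  forall x : A, cocycle 0 x -> exists a : K, exact (x - a *: one A).

(* [alpha] : a function A -> K representing a linear form on H^m(A) *)
Definition Poincare_class (A : rcdga K) (m : nat) (alpha : A -> K) : Prop :=
  (forall (a : K) (x y : A), cocycle m x -> cocycle m y ->
      alpha (a *: x + y) = a * alpha x + alpha y) /\
  (forall c : A, deg A m (dif A c) -> alpha (dif A c) = 0) /\
  (forall i, exists s : seq A, (forall k, (k < size s)%N -> cocycle i s`_k) /\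
      forall x : A, cocycle i x -> exists t : nat -> K,
        exact (x - \sum_(k < size s) t k *: s`_k)) /\
  (* H^i -> (H^(m-i))^dual, [x] |-> ([y] |-> alpha(xy)) is an isomorphism *)
  (forall i, (i <= m)%N ->
     (forall x : A, cocycle i x ->
        (forall y : A, cocycle (m - i) y -> alpha (mul A x y) = 0) -> exact x) /\
     (forall phi : A -> K,
        (forall (a : K) (x y : A), cocycle (m - i) x -> cocycle (m - i) y ->
            phi (a *: x + y) = a * phi x + phi y) ->
        (forall c : A, deg A (m - i) (dif A c) -> phi (dif A c) = 0) ->
        exists x : A, cocycle i x /\
          forall y : A, cocycle (m - i) y -> phi y = alpha (mul A x y))) /\
  (forall i, (m < i)%N -> forall x : A, cocycle i x -> exact x).

Definition Poincare (A : rcdga K) (m : nat) : Prop :=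
  exists alpha : A -> K, @Poincare_class A m alpha.

Definition cpow (A : rcdga K) (x : A) (j : nat) : A := iter j (mul A x) (one A).

(* H^*(A) is isomorphic, as a graded algebra, to K[x]/(x^p) with x a
   homogeneous variable of degree k > 0, the isomorphism sending x to [x]. *)
Definition cohom_truncated_poly (A : rcdga K) : Prop :=
  exists (k p : nat) (x : A), (0 < k)%N /\ cocycle k x /\
    (forall j, (j < p)%N -> ~ exact (cpow x j)) /\
    exact (cpow x p) /\
    (forall i (y : A), cocycle i y ->
       exact y \/ exists (j : nat) (a : K),
                   (j < p)%N /\ i = (j * k)%N /\ exact (y - a *: cpow x j)).

(* A_theta = A (x) Lambda(theta), |theta| = 2n-1, d theta = omega.
   The pair (x, y) stands for x + theta y. Since theta is odd,
   x theta = theta par(x), theta^2 = 0, and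
   (x1 + theta y1)(x2 + theta y2) = x1 x2 + theta (par(x1) y2 + y1 x2),
   d(x + theta y) = dx + omega y - theta dy. *)
Definition A_theta (A : rcdga K) (n : nat) (omega : A) : rcdga K :=
  @RCdga K ((A : lmodType K) * (A : lmodType K))%type
    (fun i xy => deg A i xy.1 /\
       (if (2 * n - 1 <= i)%N then deg A (i - (2 * n - 1)) xy.2 else xy.2 = 0))
    (fun xy1 xy2 => (mul A xy1.1 xy2.1,
                     mul A (par A xy1.1) xy2.2 + mul A xy1.2 xy2.1))
    (one A, 0)
    (fun xy => (dif A xy.1 + mul A omega xy.2, - dif A xy.2))
    (fun xy => (par A xy.1, - par A xy.2)).

End Defs.
Arguments Poincare_class {K} A m alpha.
Arguments Poincare {K} A m.
Arguments cohom_truncated_poly {K} A.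
Arguments connected {K} A.
Arguments formal {K} A.
Arguments is_cdga {K} A.

(* Main.v *)
Require Import Defs.
From HB Require Import structures.
From mathcomp Require Import all_boot all_algebra.
From mathcomp Require Import zify.
From Stdlib Require Import Classical.
Set Implicit Arguments. Unset Strict Implicit. Unset Printing Implicit Defensive.
Import Defs.
Import GRing.Theory.
Local Open Scope ring_scope.

Section Lin.
Variable K : fieldType.
Variables V W : lmodType K.
Variable f : V -> W.
Hypothesis hf : lin_fun f.
Lemma lin0 : f 0 = 0.
Proof. have := hf 1 0 0; rewrite !scale1r !addr0 => h.
by apply: (@addrI _ (f 0)); rewrite addr0 -h. Qed.
Lemma linD x y : f (x + y) = f x + f y.
Proof. by have := hf 1 x y; rewrite !scale1r. Qed.
Lemma linZ a x : f (a *: x) = a *: f x.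
Proof. by have := hf a x 0; rewrite !addr0 lin0 addr0. Qed.
Lemma linN x : f (- x) = - f x.
Proof. by rewrite -scaleN1r linZ scaleN1r. Qed.
Lemma linB x y : f (x - y) = f x - f y.
Proof. by rewrite linD linN. Qed.
Lemma lin_sum N (F : nat -> V) : f (\sum_(i < N) F i) = \sum_(i < N) f (F i).
Proof. elim: N => [|N IH]; first by rewrite !big_ord0 lin0.
by rewrite !big_ord_recr /= linD IH. Qed.
End Lin.

Lemma zid1 (V: zmodType) (a b c d : V): a + b - - c = a - - d + (c - d + b).
Proof. rewrite !opprK -!addrA; congr (_ + _); by rewrite [RHS]addrCA addNKr addrC. Qed.

Lemma zid2 (V: zmodType) (a b c : V): a + b - (c + b) = a - c.
Proof. by rewrite opprD addrACA subrr addr0. Qed.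

Lemma zid3 (V: zmodType) (a1 a c d : V): a1 - (c + d) = a - c + (-d + (a1 - a)).
Proof. rewrite [RHS]addrC -!addrA addrC opprD -!addrA; congr (_ + _); by rewrite addKr. Qed.

Lemma zid4 (V: zmodType) (a b c : V): a - c = b + (a - b - c).
Proof. by rewrite -!addrA addrCA addNKr. Qed.

Lemma zid5 (V: zmodType) (a b c : V): a - (b - c) - (a - b) = c.
Proof. by rewrite !opprB addrC -addrA addKr addrCA subrr addr0. Qed.

Lemma zid6 (V: zmodType) (a b c d : V): (a + b) - (c + d) = (a - c) + (b - d).
Proof. by rewrite opprD addrACA. Qed.

Section CD.
Variable K : fieldType.
Variable B : rcdga K.
Hypothesis hB : is_cdga B.

Lemma deg0 i : deg B i 0. Proof. by case: hB => [H _]; case: (H i). Qed.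
Lemma degL i a (x y : B) : deg B i x -> deg B i y -> deg B i (a *: x + y).
Proof. by case: hB => [H _]; case: (H i) => _ H2; apply: H2. Qed.
Lemma degD i (x y : B) : deg B i x -> deg B i y -> deg B i (x + y).
Proof. by move=> hx hy; have := degL 1 hx hy; rewrite scale1r. Qed.
Lemma degZ i a (x : B) : deg B i x -> deg B i (a *: x).
Proof. by move=> hx; have := degL a hx (deg0 i); rewrite addr0. Qed.
Lemma degN i (x : B) : deg B i x -> deg B i (- x).
Proof. by move=> hx; rewrite -scaleN1r; apply: degZ. Qed.
Lemma degB i (x y : B) : deg B i x -> deg B i y -> deg B i (x - y).
Proof. by move=> hx hy; apply: degD => //; apply: degN. Qed.
Lemma decomp (x : B) : exists (N : nat) (f : nat -> B),
      (forall i, deg B i (f i)) /\ x = \sum_(i < N) f i.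
Proof. by case: hB => [_ [H _]]. Qed.
Lemma uniq_dec (N : nat) (f : nat -> B) : (forall i, deg B i (f i)) ->
      \sum_(i < N) f i = 0 -> forall i, (i < N)%N -> f i = 0.
Proof. by case: hB => [_ [_ [H _]]]; apply: H. Qed.
Lemma mulL (x : B) : lin_fun (mul B x). Proof. by case: hB => [_ [_ [_ [H _]]]]. Qed.
Lemma mulR (y : B) : lin_fun (fun x => mul B x y). Proof. by case: hB => [_ [_ [_ [_ [H _]]]]]. Qed.
Lemma mulA (x y z : B) : mul B x (mul B y z) = mul B (mul B x y) z.
Proof. by case: hB => [_ [_ [_ [_ [_ [H _]]]]]]. Qed.
Lemma mul1x (x : B) : mul B (one B) x = x. Proof. by case: hB => [_ [_ [_ [_ [_ [_ [H _]]]]]]]; case: (H x). Qed.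
Lemma mulx1 (x : B) : mul B x (one B) = x. Proof. by case: hB => [_ [_ [_ [_ [_ [_ [H _]]]]]]]; case: (H x). Qed.
Lemma deg_one : deg B 0 (one B). Proof. by case: hB => [_ [_ [_ [_ [_ [_ [_ [H _]]]]]]]]. Qed.
Lemma deg_mul i j (x y : B) : deg B i x -> deg B j y -> deg B (i + j) (mul B x y).
Proof. by case: hB => [_ [_ [_ [_ [_ [_ [_ [_ [H _]]]]]]]]]; apply: H. Qed.
Lemma mulC i j (x y : B) : deg B i x -> deg B j y -> mul B y x = (-1) ^+ (i * j) *: mul B x y.
Proof. by case: hB => [_ [_ [_ [_ [_ [_ [_ [_ [_ [H _]]]]]]]]]]; apply: H. Qed.
Lemma par_lin : lin_fun (par B). Proof. by case: hB => [_ [_ [_ [_ [_ [_ [_ [_ [_ [_ [H _]]]]]]]]]]]. Qed.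
Lemma parE i (x : B) : deg B i x -> par B x = (-1) ^+ i *: x.
Proof. by case: hB => [_ [_ [_ [_ [_ [_ [_ [_ [_ [_ [_ [H _]]]]]]]]]]]]; apply: H. Qed.
Lemma dlin : lin_fun (dif B). Proof. by case: hB => [_ [_ [_ [_ [_ [_ [_ [_ [_ [_ [_ [_ [H _]]]]]]]]]]]]]. Qed.
Lemma deg_dif i (x : B) : deg B i x -> deg B i.+1 (dif B x).
Proof. by case: hB => [_ [_ [_ [_ [_ [_ [_ [_ [_ [_ [_ [_ [_ [H _]]]]]]]]]]]]]]; apply: H. Qed.
Lemma dd (x : B) : dif B (dif B x) = 0.
Proof. by case: hB => [_ [_ [_ [_ [_ [_ [_ [_ [_ [_ [_ [_ [_ [_ [H _]]]]]]]]]]]]]]]. Qed.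
Lemma leib i (x y : B) : deg B i x ->
      dif B (mul B x y) = mul B (dif B x) y + (-1) ^+ i *: mul B x (dif B y).
Proof. by case: hB => [_ [_ [_ [_ [_ [_ [_ [_ [_ [_ [_ [_ [_ [_ [_ H]]]]]]]]]]]]]]]; apply: H. Qed.

Lemma mulx0 (x : B) : mul B x 0 = 0. Proof. exact: (lin0 (mulL x)). Qed.
Lemma mul0x (y : B) : mul B 0 y = 0. Proof. exact: (lin0 (mulR y)). Qed.
Lemma mulxD (x y z : B) : mul B x (y + z) = mul B x y + mul B x z. Proof. exact: (linD (mulL x)). Qed.
Lemma mulDx (x y z : B) : mul B (x + y) z = mul B x z + mul B y z. Proof. exact: (linD (mulR z)). Qed.
Lemma mulxZ a (x y : B) : mul B x (a *: y) = a *: mul B x y. Proof. exact: (linZ (mulL x)). Qed.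
Lemma mulZx a (x y : B) : mul B (a *: x) y = a *: mul B x y. Proof. exact: (linZ (mulR y)). Qed.
Lemma mulxN (x y : B) : mul B x (- y) = - mul B x y. Proof. exact: (linN (mulL x)). Qed.
Lemma mulNx (x y : B) : mul B (- x) y = - mul B x y. Proof. exact: (linN (mulR y)). Qed.
Lemma mulxB (x y z : B) : mul B x (y - z) = mul B x y - mul B x z. Proof. exact: (linB (mulL x)). Qed.
Lemma mulBx (x y z : B) : mul B (x - y) z = mul B x z - mul B y z. Proof. exact: (linB (mulR z)). Qed.
Lemma dif0 : dif B 0 = 0. Proof. exact: (lin0 dlin). Qed.
Lemma difD (x y : B) : dif B (x + y) = dif B x + dif B y. Proof. exact: (linD dlin). Qed.
Lemma difZ a (x : B) : dif B (a *: x) = a *: dif B x. Proof. exact: (linZ dlin). Qed.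
Lemma difN (x : B) : dif B (- x) = - dif B x. Proof. exact: (linN dlin). Qed.
Lemma difB (x y : B) : dif B (x - y) = dif B x - dif B y. Proof. exact: (linB dlin). Qed.
Lemma par0 : par B 0 = 0. Proof. exact: (lin0 par_lin). Qed.

Lemma sign2 (i : nat) : ((-1) ^+ i * (-1) ^+ i : K) = 1.
Proof. by rewrite -signr_odd -exprD -signr_odd oddD addbb. Qed.

Lemma dif1 : dif B (one B) = 0.
Proof.
have := leib (one B) deg_one; rewrite mul1x expr0 scale1r mul1x mulx1 => h.
by apply: (@addrI _ (dif B (one B))); rewrite addr0 -h.
Qed.

Lemma exact0 : exact (0 : B). Proof. by exists 0; rewrite dif0. Qed.
Lemma exactD (x y : B) : exact x -> exact y -> exact (x + y).
Proof. by move=> [c ->] [e ->]; exists (c + e); rewrite difD. Qed.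
Lemma exactZ a (x : B) : exact x -> exact (a *: x).
Proof. by move=> [c ->]; exists (a *: c); rewrite difZ. Qed.
Lemma exactN (x : B) : exact x -> exact (- x).
Proof. by move=> [c ->]; exists (- c); rewrite difN. Qed.
Lemma exactB (x y : B) : exact x -> exact y -> exact (x - y).
Proof. by move=> hx hy; apply: exactD => //; apply: exactN. Qed.
Lemma exact_dif (c : B) : exact (dif B c). Proof. by exists c. Qed.

Lemma hprim m (x : B) : exact x -> deg B m x ->
  exists c, deg B m.-1 c /\ x = dif B c /\ (m = 0%N -> x = 0).
Proof.
case=> c0 ->{x} hx.
case: (decomp c0) => N [f [hf def]].
pose X := dif B c0.
pose g := fun i : nat => (if (0 < i)%N && (i.-1 < N)%N then dif B (f i.-1) else 0)
  - (if i == m then X else 0).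
have hg i : deg B i (g i).
  rewrite /g; apply: degB.
    case: ifP => [/andP [i0 _]|_]; last exact: deg0.
    by have := deg_dif (hf i.-1); rewrite prednK.
  by case: eqP => [->|_]; [exact: hx | exact: deg0].
have hsum : \sum_(i < (N + m).+1) g i = 0.
  have e2 : \sum_(i < (N + m).+1) (if (i : nat) == m then X else 0) = X.
    by rewrite -big_mkcond (big_ord1_eq _ (fun _ => X)) ltnS leq_addl.
  have e1 : \sum_(i < (N + m).+1)
      (if (0 < i)%N && (i.-1 < N)%N then dif B (f i.-1) else 0) = X.
    rewrite big_ord_recl /=.
    have -> : \sum_(i < N + m) (if (0 < bump 0 i)%N && ((bump 0 i).-1 < N)%N
         then dif B (f (bump 0 i).-1) else 0)
       = \sum_(i < N + m) (if (i < N)%N then dif B (f i) else 0) by [].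
    rewrite -big_mkcond -(big_ord_widen _ (fun i => dif B (f i))) ?leq_addr //.
    by rewrite /X def (lin_sum dlin) add0r.
  rewrite /g sumrB e1 e2 subrr //.
have hmN : (m < (N + m).+1)%N by rewrite ltnS leq_addl.
have := uniq_dec hg hsum hmN.
rewrite /g eqxx.
clear hmN hsum hg; subst g.
case: m hx => [|m] hx /=.
  rewrite sub0r => /eqP; rewrite oppr_eq0 => /eqP h.
  by exists 0; rewrite dif0 -/X h; split; [exact: deg0|].
case: ifP => hm.
  move=> /eqP; rewrite subr_eq0 => /eqP h.
  by exists (f m); split; [exact: hf | split; [rewrite -/X -h | ]].
rewrite sub0r => /eqP; rewrite oppr_eq0 => /eqP h.
by exists 0; rewrite dif0 -/X h; split; [exact: deg0|].
Qed.


Lemma exact_mulr m (e z : B) : exact e -> deg B m e -> dif B z = 0 -> exact (mul B e z).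
Proof.
move=> he hd hz; case: (hprim he hd) => c [hc [-> _]].
exists (mul B c z); rewrite (leib _ hc) hz mulx0 scaler0 addr0 //.
Qed.

Lemma exact_mull i (y e : B) : deg B i y -> dif B y = 0 -> exact e -> exact (mul B y e).
Proof.
move=> hy dy [c ->]; exists ((-1) ^+ i *: mul B y c).
by rewrite difZ (leib _ hy) dy mul0x add0r scalerA sign2 scale1r.
Qed.

Lemma cocycle_mul i j (x y : B) : cocycle i x -> cocycle j y -> cocycle (i + j) (mul B x y).
Proof.
move=> [hx dx] [hy dy]; split; first exact: deg_mul.
by rewrite (leib _ hx) dx dy mul0x mulx0 scaler0 addr0.
Qed.

Lemma cocycle_one : cocycle 0 (one B).
Proof. by split; [exact: deg_one | exact: dif1]. Qed.

Lemma parpar i (x : B) : deg B i x -> par B (par B x) = x.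
Proof. by move=> hx; rewrite (parE hx) (linZ par_lin) (parE hx) scalerA sign2 scale1r. Qed.

Definition Sm p q r (x y z : B) := exists u v, deg B (p + q - 1) u /\ deg B (q + r - 1) v /\
  dif B u = mul B x y /\ dif B v = mul B y z /\ exact (mul B u z - mul B (par B x) v).

Lemma TX p q r (x x1 y z : B) : (0 < p)%N -> cocycle p x -> cocycle p x1 -> cocycle q y ->
  cocycle r z -> exact (x1 - x) -> Sm p q r x y z -> Sm p q r x1 y z.
Proof.
move=> p0 [hx dx] [hx1 dx1] [hy dy] [hz dz] he [u [v [hu [hv [du [dv hw]]]]]].
have hd : deg B p (x1 - x) by apply: degB.
case: (hprim he hd) => s [hs [ds _]].
exists (u + mul B s y), v; split.
  apply: degD => //; have -> : (p + q - 1 = p.-1 + q)%N by case: (p) p0 => // p' _; rewrite addSn subn1.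
  exact: deg_mul hs hy.
split => //; split.
  by rewrite difD du (leib _ hs) -ds dy mulx0 scaler0 addr0 mulBx addrC subrK.
split => //.
have -> : mul B (u + mul B s y) z - mul B (par B x1) v =
   (mul B u z - mul B (par B x) v) + (-1) ^+ p.-1 *: dif B (mul B s v).
  rewrite (leib _ hs) dv -ds scalerDr scalerA sign2 scale1r.
  rewrite (parE hx) (parE hx1) mulDx -mulA mulBx !mulZx.
  case: (p) p0 => // p' _ /=; rewrite exprS mulN1r !scaleNr scalerBr.
  exact: zid1.
exact: exactD hw (exactZ _ (exact_dif _)).
Qed.

Lemma TY p q r (x y y1 z : B) : (0 < q)%N -> cocycle p x -> cocycle q y -> cocycle q y1 ->
  cocycle r z -> exact (y1 - y) -> Sm p q r x y z -> Sm p q r x y1 z.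
Proof.
move=> q0 [hx dx] [hy dy] [hy1 dy1] [hz dz] he [u [v [hu [hv [du [dv hw]]]]]].
have hd : deg B q (y1 - y) by apply: degB.
case: (hprim he hd) => t [ht [dt _]].
exists (u + (-1) ^+ p *: mul B x t), (v + mul B t z); split.
  apply: degD => //; apply: degZ; have -> : (p + q - 1 = p + q.-1)%N by case: (q) q0 => // q' _; rewrite addnS subn1.
  exact: deg_mul hx ht.
split.
  apply: degD => //; have -> : (q + r - 1 = q.-1 + r)%N by case: (q) q0 => // q' _; rewrite addSn subn1.
  exact: deg_mul ht hz.
split.
  by rewrite difD du difZ (leib _ hx) dx mul0x add0r scalerA sign2 scale1r -dt -mulxD addrC subrK.
split.
  by rewrite difD dv (leib _ ht) dz mulx0 scaler0 addr0 -dt -mulDx addrC subrK.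
have -> : mul B (u + (-1) ^+ p *: mul B x t) z - mul B (par B x) (v + mul B t z) =
   mul B u z - mul B (par B x) v.
  rewrite mulDx mulxD (parE hx) !mulZx mulA; exact: zid2.
exact: hw.
Qed.

Lemma TZ p q r (x y z z1 : B) : (0 < p + q)%N -> (0 < r)%N -> cocycle p x -> cocycle q y ->
  cocycle r z -> cocycle r z1 -> exact (z1 - z) -> Sm p q r x y z -> Sm p q r x y z1.
Proof.
move=> pq0 r0 [hx dx] [hy dy] [hz dz] [hz1 dz1] he [u [v [hu [hv [du [dv hw]]]]]].
have hd : deg B r (z1 - z) by apply: degB.
case: (hprim he hd) => e [he' [de _]].
exists u, (v + (-1) ^+ q *: mul B y e); split => //.
split.
  apply: degD => //; apply: degZ; have -> : (q + r - 1 = q + r.-1)%N by case: (r) r0 => // r' _; rewrite addnS subn1.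
  exact: deg_mul hy he'.
split => //; split.
  by rewrite difD dv difZ (leib _ hy) dy mul0x add0r scalerA sign2 scale1r -de -mulxD addrC subrK.
have -> : mul B u z1 - mul B (par B x) (v + (-1) ^+ q *: mul B y e) =
   (mul B u z - mul B (par B x) v) + (-1) ^+ (p + q - 1) *: dif B (mul B u e).
  rewrite (leib _ hu) du -de scalerDr scalerA sign2 scale1r.
  rewrite (parE hx) mulxD !mulZx mulxZ scalerA mulA mulxB.
  have -> : ((-1) ^+ (p + q - 1) : K) = - ((-1) ^+ p * (-1) ^+ q).
    by rewrite -exprD; case: (p + q)%N pq0 => // s _; rewrite subn1 /= exprS mulN1r opprK.
  rewrite !scaleNr; exact: zid3.
exact: exactD hw (exactZ _ (exact_dif _)).
Qed.

End CD.

Definition MP0 (K : fieldType) (B : rcdga K) := forall p q r (x y z : B),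
  (0 < p)%N -> (0 < q)%N -> (0 < r)%N -> cocycle p x -> cocycle q y -> cocycle r z ->
  exact (mul B x y) -> exact (mul B y z) -> Sm p q r x y z.

Section QI.
Variable K : fieldType.
Variables B C : rcdga K.
Hypotheses (hB : is_cdga B) (hC : is_cdga C).
Variable f : B -> C.
Hypothesis hf : quasi_iso f.

Lemma flin : lin_fun f. Proof. by case: hf => [[]]. Qed.
Lemma fmul x y : f (mul B x y) = mul C (f x) (f y). Proof. by case: hf => [[_ [_ [H _]]] _]. Qed.
Lemma fdeg i x : deg B i x -> deg C i (f x). Proof. by case: hf => [[_ [_ [_ [H _]]]] _]; apply: H. Qed.
Lemma fdif x : f (dif B x) = dif C (f x). Proof. by case: hf => [[_ [_ [_ [_ H]]]] _]. Qed.
Lemma fsurj i (b : C) : cocycle i b -> exists a : B, cocycle i a /\ exact (b - f a).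
Proof. by case: hf => [_ H]; case: (H i) => H1 _; apply: H1. Qed.
Lemma finj i (a : B) : cocycle i a -> exact (f a) -> exact a.
Proof. by case: hf => [_ H]; case: (H i) => _ H1; apply: H1. Qed.
Lemma fpar i x : deg B i x -> f (par B x) = par C (f x).
Proof. by move=> hx; rewrite (parE hB hx) (parE hC (fdeg hx)) (linZ flin). Qed.
Lemma fexact x : exact x -> exact (f x).
Proof. by case=> c ->; exists (f c); rewrite fdif. Qed.
Lemma fcocycle i x : cocycle i x -> cocycle i (f x).
Proof. by case=> hx dx; split; [exact: fdeg | rewrite -fdif dx (lin0 flin)]. Qed.

Lemma map_Sm p q r (x y z : B) : deg B p x -> Sm p q r x y z -> Sm p q r (f x) (f y) (f z).
Proof.
move=> hx [u [v [hu [hv [du [dv hw]]]]]].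
exists (f u), (f v); split; first exact: fdeg.
split; first exact: fdeg.
split; first by rewrite -fdif du fmul.
split; first by rewrite -fdif dv fmul.
by rewrite -(fpar hx) -!fmul -(linB flin); apply: fexact.
Qed.

Lemma MP0_BC : MP0 B -> MP0 C.
Proof.
move=> HB p q r x y z p0 q0 r0 cx cy cz exy eyz.
case: (fsurj cx) => a [ca ea]; case: (fsurj cy) => b [cb eb]; case: (fsurj cz) => c [cc ec].
have hprod : forall i j (x' y' : C) (a' b' : B), cocycle i x' -> cocycle j y' ->
    cocycle i a' -> cocycle j b' -> exact (x' - f a') -> exact (y' - f b') ->
    exact (mul C x' y') -> exact (mul B a' b').
  move=> i j x' y' a' b' cx' cy' ca' cb' ea' eb' exy'.
  apply: (finj (cocycle_mul hB ca' cb')); rewrite fmul.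
  have -> : mul C (f a') (f b') = mul C x' y' - mul C (x' - f a') (f b') - mul C x' (y' - f b').
    by rewrite (mulBx hC) (mulxB hC); apply: esym; apply: zid5.
  apply: (exactB hC); [apply: (exactB hC) => //|].
    exact: (exact_mulr hC ea' (degB hC cx'.1 (fdeg ca'.1)) (fcocycle cb').2).
  exact: (exact_mull hC cx'.1 cx'.2 eb').
have eab := hprod _ _ _ _ _ _ cx cy ca cb ea eb exy.
have ebc := hprod _ _ _ _ _ _ cy cz cb cc eb ec eyz.
have S := HB p q r a b c p0 q0 r0 ca cb cc eab ebc.
have S1 := map_Sm ca.1 S.
have S2 := TX hC p0 (fcocycle ca) cx (fcocycle cb) (fcocycle cc) ea S1.
have S3 := TY hC q0 cx (fcocycle cb) cy (fcocycle cc) eb S2.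
have pq0 : (0 < p + q)%N by rewrite addn_gt0 p0.
exact: (TZ hC pq0 r0 cx cy (fcocycle cc) cz ec S3).
Qed.

Lemma MP0_CB : MP0 C -> MP0 B.
Proof.
move=> HC p q r x y z p0 q0 r0 cx cy cz exy eyz.
have fexy : exact (mul C (f x) (f y)) by rewrite -fmul; apply: fexact.
have fyz : exact (mul C (f y) (f z)) by rewrite -fmul; apply: fexact.
case: (HC p q r (f x) (f y) (f z) p0 q0 r0 (fcocycle cx) (fcocycle cy) (fcocycle cz) fexy fyz)
  => u' [v' [hu' [hv' [du' [dv' hw']]]]].
case: (hprim hB exy (deg_mul hB cx.1 cy.1)) => u0 [hu0 [du0 _]].
case: (hprim hB eyz (deg_mul hB cy.1 cz.1)) => v0 [hv0 [dv0 _]].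
rewrite -subn1 in hu0; rewrite -subn1 in hv0.
have ce : cocycle (p + q - 1) (f u0 - u').
  split; first exact: (degB hC (fdeg hu0) hu').
  by rewrite (difB hC) -fdif -du0 fmul du' subrr.
have ce' : cocycle (q + r - 1) (f v0 - v').
  split; first exact: (degB hC (fdeg hv0) hv').
  by rewrite (difB hC) -fdif -dv0 fmul dv' subrr.
case: (fsurj ce) => e0 [ce0 ee0].
case: (fsurj ce') => e1 [ce1 ee1].
have hu : deg B (p + q - 1) (u0 - e0) by apply: (degB hB hu0 ce0.1).
have hv : deg B (q + r - 1) (v0 - e1) by apply: (degB hB hv0 ce1.1).
have hpx : deg B p (par B x) by rewrite (parE hB cx.1); apply: (degZ hB _ cx.1).
exists (u0 - e0), (v0 - e1).
split => //; split => //.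
split; first by rewrite (difB hB) -du0 ce0.2 subr0.
split; first by rewrite (difB hB) -dv0 ce1.2 subr0.
apply: (@finj (p + q + r - 1)).
  split.
    apply: (degB hB).
      have -> : (p + q + r - 1 = (p + q - 1) + r)%N by lia.
      exact: (deg_mul hB hu cz.1).
    have -> : (p + q + r - 1 = p + (q + r - 1))%N by lia.
    exact: (deg_mul hB hpx hv).
  rewrite (difB hB) (leib hB _ hu) cz.2 (mulx0 hB) scaler0 addr0 (difB hB) -du0 ce0.2 subr0.
  rewrite (parE hB cx.1) (mulZx hB) (difZ hB) (leib hB _ cx.1) cx.2 (mul0x hB) add0r.
  by rewrite (difB hB) -dv0 ce1.2 subr0 scalerA sign2 scale1r (mulA hB) subrr.
rewrite (linB flin) !fmul (fpar cx.1) !(linB flin).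
rewrite (zid4 (f u0) u' (f e0)) (zid4 (f v0) v' (f e1)) (mulDx hC) (mulxD hC) zid6.
apply: (exactD hC hw'); apply: (exactB hC).
  exact: (exact_mulr hC ee0 (degB hC ce.1 (fdeg ce0.1)) (fcocycle cz).2).
apply: (exact_mull hC (i := p)); first by rewrite (parE hC (fdeg cx.1)); apply: (degZ hC _ (fdeg cx.1)).
  by rewrite (parE hC (fdeg cx.1)) (difZ hC) (fcocycle cx).2 scaler0.
exact: ee1.
Qed.

End QI.

Lemma zigzag_MP0 (K : fieldType) (A H : rcdga K) : zigzag A H -> (MP0 A <-> MP0 H).
Proof.
elim => [A0 hA0 | A0 B0 C0 f hA0 hB0 hf _ IH | A0 B0 C0 f hA0 hB0 hf _ IH] //.
  split => h; first by apply/IH; exact: (MP0_BC hA0 hB0 hf h).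
  exact: (MP0_CB hA0 hB0 hf (IH.2 h)).
split => h; first by apply/IH; exact: (MP0_CB hB0 hA0 hf h).
exact: (MP0_BC hB0 hA0 hf (IH.2 h)).
Qed.

Lemma MP0_triv (K : fieldType) (H : rcdga K) : is_cdga H -> (forall x, dif H x = 0) -> MP0 H.
Proof.
move=> hH h0 p q r x y z _ _ _ _ _ _ [c exy] [c' eyz].
exists 0, 0; split; first exact: deg0.
split; first exact: deg0.
rewrite exy eyz !h0; split => //; split => //.
by rewrite (mul0x hH) (mulx0 hH) subrr; exists 0; rewrite h0.
Qed.

Lemma formal_MP0 (K : fieldType) (A : rcdga K) : formal A -> MP0 A.
Proof.
case=> H [hH [h0 zz]]; apply/(zigzag_MP0 zz); exact: MP0_triv.
Qed.

Lemma min_ex (P : nat -> Prop) : (exists n, P n) -> exists n, P n /\ forall m, (m < n)%N -> ~ P m.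
Proof.
move=> [n Pn]; elim/ltn_ind: n Pn => n IH Pn.
case: (classic (exists m, (m < n)%N /\ P m)) => [[m [lt Pm]]|H]; first exact: IH m lt Pm.
by exists n; split => // m lt Pm; apply: H; exists m.
Qed.

Section Th.
Variable K : fieldType.
Variable A : rcdga K.
Variable n : nat.
Hypothesis n_gt0 : (0 < n)%N.
Hypothesis hA : is_cdga A.
Variable omega : A.
Hypothesis homega : cocycle (2 * n) omega.
Hypothesis omega_nex : ~ exact omega.

Local Notation T := (A_theta n omega).

Lemma cocT i (x : A) : cocycle i x -> @cocycle K T i (x, 0).
Proof.
case=> hx dx; split; first by split => //; case: ifP => _ //; exact: deg0.
rewrite /= dx (mulx0 hA) (dif0 hA) oppr0 addr0 //.
Qed.

Lemma exT (x : A) : exact x -> @exact K T (x, 0).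
Proof.
case=> c ->; exists (c, 0); rewrite /= (mulx0 hA) (dif0 hA) oppr0 addr0 //.
Qed.


Hypothesis hconn : connected A.

Lemma scal_om (mu : K) : exact (mu *: omega) -> mu = 0.
Proof.
move=> h; apply/eqP; apply/negPn/negP => mu0; apply: omega_nex.
have -> : omega = mu^-1 *: (mu *: omega) by rewrite scalerA mulVf // scale1r.
exact: (exactZ hA).
Qed.

Lemma deg0_scal (y : A) : cocycle 0 y -> exists mu : K, y = mu *: one A.
Proof.
move=> cy; case: hconn => _ /(_ y cy) [mu hmu]; exists mu.
have hd : deg A 0 (y - mu *: one A) by apply: (degB hA cy.1); apply: (degZ hA _ (deg_one hA)).
case: (hprim hA hmu hd) => c [_ [_ /(_ erefl) /eqP]]; rewrite subr_eq0 => /eqP //.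
Qed.

Lemma not_MP0 k p0 (a x z : A) (lam : K) :
  (0 < k)%N -> cocycle k a ->
  (forall j (y : A), (0 < j)%N -> (j < k)%N -> cocycle j y -> exact y) ->
  (0 < p0)%N -> (p0 < 2 * n)%N -> (k < 2 * n)%N -> cocycle p0 x -> ~ exact x ->
  exact (mul A x a) ->
  cocycle (2 * n - k) z -> lam != 0 -> exact (mul A a z - lam *: omega) -> ~ MP0 T.
Proof.
move=> k0 ca kmin p00 p0n kn cx nex exa cz lam0 eaz HM.
have eXY : @exact K T (mul T (x,0) (a,0)).
  have -> : mul T (x,0) (a,0) = (mul A x a, 0) by rewrite /= (mulx0 hA) (mul0x hA) addr0.
  exact: exT.
have eYZ : @exact K T (mul T (a,0) (z,0)).
  case: eaz => e he; exists (e, lam *: one A).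
  rewrite /= (mulx0 hA) (mul0x hA) addr0 (difZ hA) (dif1 hA) scaler0 oppr0 (mulxZ hA) (mulx1 hA).
  by rewrite -he subrK.
have r0 : (0 < 2 * n - k)%N by rewrite subn_gt0.
case: (HM p0 k (2 * n - k)%N (x,0) (a,0) (z,0) p00 k0 r0 (cocT cx) (cocT ca) (cocT cz) eXY eYZ)
  => [[u1 u2] [[v1 v2] [hU [hV [dU [dV [[g1 g2] hG]]]]]]].
move: hU hV => /= [hu1 hu2] [hv1 hv2].
have e1 : (k + (2 * n - k) - 1 = 2 * n - 1)%N by lia.
rewrite e1 leqnn subnn in hv2.
have dv2 : dif A v2 = 0.
  have := congr1 snd dV => /=; rewrite (mulx0 hA) (mul0x hA) addr0 => /eqP; rewrite oppr_eq0 => /eqP //.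
have du2 : dif A u2 = 0.
  have := congr1 snd dU => /=; rewrite (mulx0 hA) (mul0x hA) addr0 => /eqP; rewrite oppr_eq0 => /eqP //.
case: (deg0_scal (conj hv2 dv2)) => mu hmu; subst v2.
have fdV := congr1 fst dV; rewrite /= (mulxZ hA) (mulx1 hA) in fdV.
case: eaz => e he.
have mulam : mu = lam.
  apply/eqP; rewrite -subr_eq0; apply/eqP; apply: scal_om.
  have -> : (mu - lam) *: omega = dif A e - dif A v1.
    by rewrite scalerBl -he -fdV addrAC [dif A v1 + _]addrC addrK.
  exact: (exactB hA (exact_dif e) (exact_dif v1)).
subst mu.
have sG := congr1 snd hG.
rewrite /= (mulx0 hA) add0r (parpar hA cx.1) (par0 hA) oppr0 (mul0x hA) addr0 in sG.
rewrite (mulxZ hA) (mulx1 hA) in sG.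
have ex2 : exact (mul A u2 z).
  case: ifP hu2 => _ hu2; last by rewrite hu2 (mul0x hA); exact: (exact0 hA).
  move: hu2; set j := (p0 + k - 1 - (2 * n - 1))%N => hu2.
  have jk : (j < k)%N by rewrite /j; lia.
  have [j0|jpos] := posnP j.
    rewrite j0 in hu2.
    case: (deg0_scal (conj hu2 du2)) => mu' hmu'; subst u2.
    have fdU := congr1 fst dU; rewrite /= (mulxZ hA) (mulx1 hA) in fdU.
    case: exa => g hg.
    have -> : mu' = 0.
      apply: scal_om.
      have -> : mu' *: omega = dif A g - dif A u1 by rewrite -hg -fdU [dif A u1 + _]addrC addrK.
      exact: (exactB hA (exact_dif g) (exact_dif u1)).
    by rewrite scale0r (mul0x hA); exact: (exact0 hA).
  exact: (exact_mulr hA (kmin j u2 jpos jk (conj hu2 du2)) hu2 cz.2).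
apply: nex.
have -> : x = lam^-1 *: (lam *: x) by rewrite scalerA mulVf // scale1r.
apply: (exactZ hA).
have -> : lam *: x = mul A u2 z - (mul A u2 z - lam *: x) by rewrite opprB addrC subrK.
rewrite sG opprK.
exact: (exactD hA ex2 (exact_dif g2)).
Qed.


Variable alpha : A -> K.
Hypothesis hP : Poincare_class A (2 * n) alpha.

Lemma Plin (c : K) (x y : A) : cocycle (2 * n) x -> cocycle (2 * n) y ->
  alpha (c *: x + y) = c * alpha x + alpha y.
Proof. by case: hP => [H _]; apply: H. Qed.
Lemma Phigh i (x : A) : (2 * n < i)%N -> cocycle i x -> exact x.
Proof. by move=> hi hc; case: hP => [_ [_ [_ [_ H]]]]; exact: (H i hi x hc). Qed.
Lemma Pinj i (x : A) : (i <= 2 * n)%N -> cocycle i x ->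
  (forall y : A, cocycle (2 * n - i) y -> alpha (mul A x y) = 0) -> exact x.
Proof. by case: hP => [_ [_ [_ [H _]]]] hi; case: (H i hi) => H1 _; apply: H1. Qed.

Lemma coc0 i : cocycle i (0 : A). Proof. by split; [exact: deg0 | exact: dif0]. Qed.
Lemma cocL i c (x y : A) : cocycle i x -> cocycle i y -> cocycle i (c *: x + y).
Proof.
move=> [hx dx] [hy dy]; split; first exact: degL.
by rewrite (difD hA) (difZ hA) dx dy scaler0 addr0.
Qed.
Lemma cocZ i c (x : A) : cocycle i x -> cocycle i (c *: x).
Proof. by move=> h; have := cocL c h (coc0 i); rewrite addr0. Qed.
Lemma cocD i (x y : A) : cocycle i x -> cocycle i y -> cocycle i (x + y).
Proof. by move=> h1 h2; have := cocL 1 h1 h2; rewrite scale1r. Qed.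
Lemma cocB i (x y : A) : cocycle i x -> cocycle i y -> cocycle i (x - y).
Proof. by move=> h1 h2; apply: cocD => //; rewrite -scaleN1r; apply: cocZ. Qed.

Lemma alpha0 : alpha 0 = 0.
Proof.
have := Plin 1 (coc0 _) (coc0 _); rewrite scaler0 addr0 mul1r => h.
by apply: (@addrI _ (alpha 0)); rewrite addr0 -h.
Qed.
Lemma alphaZ c (x : A) : cocycle (2 * n) x -> alpha (c *: x) = c * alpha x.
Proof. by move=> h; have := Plin c h (coc0 _); rewrite addr0 alpha0 addr0. Qed.

Hypothesis homega1 : alpha omega = 1.

Lemma top (c : A) : cocycle (2 * n) c -> exact (c - alpha c *: omega).
Proof.
move=> cc.
have cw : cocycle (2 * n) (c - alpha c *: omega) by apply: cocB => //; apply: cocZ.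
apply: (Pinj (leqnn _) cw) => y; rewrite subnn => cy.
case: (deg0_scal cy) => mu ->.
rewrite (mulxZ hA) (mulx1 hA) (alphaZ _ cw).
have -> : c - alpha c *: omega = (- alpha c) *: omega + c by rewrite scaleNr addrC.
by rewrite Plin // homega1 mulr1 addNr mulr0.
Qed.

Lemma nex_alpha (v : A) : cocycle (2 * n) v -> ~ exact v -> alpha v != 0.
Proof.
move=> cv nv; apply/negP => /eqP h; apply: nv.
by have := top cv; rewrite h scale0r subr0.
Qed.

Lemma top_prop (u v : A) : cocycle (2 * n) u -> cocycle (2 * n) v -> alpha v != 0 ->
  exact (u - (alpha u / alpha v) *: v).
Proof.
move=> cu cv v0.
have -> : u - (alpha u / alpha v) *: v =
   (u - alpha u *: omega) - (alpha u / alpha v) *: (v - alpha v *: omega).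
  by rewrite scalerBr scalerA divfK // opprB addrA subrK.
by apply: (exactB hA); [apply: top | apply: (exactZ hA); apply: top].
Qed.


Lemma cpowSr (x : A) j : cpow x j.+1 = mul A (cpow x j) x.
Proof.
elim: j => [|j IH]; first by rewrite /cpow /= (mulx1 hA) (mul1x hA).
have -> : cpow x j.+2 = mul A x (cpow x j.+1) by [].
by rewrite IH (mulA hA) -IH.
Qed.

Lemma cpowD (x : A) i j : mul A (cpow x i) (cpow x j) = cpow x (i + j).
Proof.
elim: i => [|i IH]; first by rewrite /cpow /= (mul1x hA).
have -> : cpow x i.+1 = mul A x (cpow x i) by [].
by rewrite addSn -(mulA hA) IH.
Qed.

Lemma coc_cpow k j (x : A) : cocycle k x -> cocycle (j * k) (cpow x j).
Proof.
move=> cx; elim: j => [|j IH]; first by rewrite mul0n; exact: cocycle_one.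
by rewrite mulSn; exact: (cocycle_mul hA cx IH).
Qed.

Lemma main_thm : MP0 T -> cohom_truncated_poly A.
Proof.
move=> HM; apply: NNPP => ntr.
have n2 : (0 < 2 * n)%N by rewrite muln_gt0 n_gt0.
have [k [[k0 [a [ca na]]] kmin']] : exists k, ((0 < k)%N /\ exists a : A, cocycle k a /\ ~ exact a)
    /\ forall m, (m < k)%N -> ~ ((0 < m)%N /\ exists a : A, cocycle m a /\ ~ exact a).
  by apply: min_ex; exists (2 * n)%N; split => //; exists omega.
have kmin : forall j (y : A), (0 < j)%N -> (j < k)%N -> cocycle j y -> exact y.
  move=> j y j0 jk cy; apply: NNPP => ny; apply: (kmin' j jk); split => //; by exists y.
have k2n : (k <= 2 * n)%N.
  by rewrite leqNgt; apply/negP => h; exact: na (Phigh h ca).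
have final : forall (x : A) p0, (0 < p0)%N -> (p0 < 2 * n)%N -> cocycle p0 x -> ~ exact x ->
    exact (mul A x a) -> False.
  move=> x p0 p00 p0n cx nx exa.
  have kp0 : (k <= p0)%N.
    by rewrite leqNgt; apply/negP => h; exact: nx (kmin p0 x p00 h cx).
  have kn : (k < 2 * n)%N by apply: leq_ltn_trans kp0 p0n.
  have [z [cz az0]] : exists z, cocycle (2 * n - k) z /\ alpha (mul A a z) != 0.
    apply: NNPP => hz; apply: na; apply: (Pinj k2n ca) => y cy.
    apply: NNPP => hy; apply: hz; exists y; split => //; by apply/eqP.
  have cmz : cocycle (2 * n) (mul A a z) by have := cocycle_mul hA ca cz; rewrite subnKC.
  exact: (not_MP0 k0 ca kmin p00 p0n kn cx nx exa cz az0 (top cmz) HM).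
have [pp [epp ppmin]] : exists pp, exact (cpow a pp) /\ forall m, (m < pp)%N -> ~ exact (cpow a m).
  apply: min_ex; exists (2 * n).+1; apply: (Phigh _ (coc_cpow _ ca)).
  exact: (leq_pmulr _ k0).
have one_nex : ~ exact (one A) by case: hconn.
have pp2 : (1 < pp)%N.
  rewrite ltnNge; apply/negP => hle.
  have : (pp == 0)%N || (pp == 1)%N by move: hle; case: (pp) => [|[|]].
  case/orP => /eqP e; rewrite e in epp; first exact: one_nex epp.
  apply: na; have <- : mul A a (one A) = a by rewrite (mulx1 hA).
  exact: epp.
have step : forall (c : A) i, (0 < i)%N -> cocycle i c -> ~ exact c -> exists r,
    ~ exact (mul A c (cpow a r)) /\ exact (mul A (mul A c (cpow a r)) a) /\
    forall r0, exact (mul A c (cpow a r0.+1)) -> (r <= r0)%N.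
  move=> c i i0 cc nc.
  have [r [Pr rmin]] : exists r, exact (mul A c (cpow a r.+1)) /\
      forall m, (m < r)%N -> ~ exact (mul A c (cpow a m.+1)).
    apply: min_ex; exists (2 * n)%N; apply: (Phigh _ (cocycle_mul hA cc (coc_cpow _ ca))).
    have := leq_pmulr (2 * n).+1 k0; lia.
  exists r; split.
    case: r Pr rmin => [|r] Pr rmin; first by rewrite /cpow /= (mulx1 hA).
    exact: rmin r (ltnSn r).
  split; first by rewrite -(mulA hA) -cpowSr.
  by move=> r0 h; rewrite leqNgt; apply/negP => h'; exact: rmin r0 h' h.
pose x1 := cpow a pp.-1.
have nx1 : ~ exact x1 by apply: ppmin; rewrite ltn_predL ltnW.
have cx1 : cocycle (pp.-1 * k) x1 by apply: coc_cpow.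
have ex1a : exact (mul A x1 a) by rewrite /x1 -cpowSr prednK // ltnW.
case: (ltngtP (pp.-1 * k) (2 * n)) => hpk.
- apply: (final x1 (pp.-1 * k)%N) => //.
  by rewrite muln_gt0 k0 andbT; case: (pp) pp2 => [|[|]].
- exact: nx1 (Phigh hpk cx1).
rewrite hpk in cx1.
have ax1 : alpha x1 != 0 by apply: nex_alpha.
have [i [c [cc [nc hc]]]] : exists i (c : A), cocycle i c /\ ~ exact c /\
    forall j (mu : K), (j < pp)%N -> i = (j * k)%N -> ~ exact (c - mu *: cpow a j).
  apply: NNPP => H; apply: ntr; exists k, pp, a; split => //; split => //; split => //; split => //.
  move=> i y cy; apply: NNPP => hn; apply: H; exists i, y; split => //; split.
    by move=> ey; apply: hn; left.
  by move=> j mu jp ij ey; apply: hn; right; exists j, mu.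
case: (ltngtP i (2 * n)) => hi; last first.
- apply: (hc pp.-1 (alpha c / alpha x1)); first by rewrite ltn_predL ltnW.
    by rewrite hi hpk.
  by apply: top_prop => //; rewrite -hi.
- exact: nc (Phigh hi cc).
have [i0|ipos] := posnP i.
  rewrite i0 in cc; case: (deg0_scal cc) => mu hmu.
  apply: (hc 0%N mu); [exact: ltnW | by rewrite i0 | ].
  by rewrite hmu subrr; exact: (exact0 hA).
case: (step c i ipos cc nc) => r [nx2 [ex2 rmin]].
pose x2 := mul A c (cpow a r).
have cx2 : cocycle (i + r * k) x2 by apply: (cocycle_mul hA cc); apply: coc_cpow.
case: (ltngtP (i + r * k) (2 * n)) => hirk.
- by apply: (final x2 (i + r * k)%N) => //; rewrite addn_gt0 ipos.
- exact: nx2 (Phigh hirk cx2).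
have r0 : (0 < r)%N by rewrite lt0n; apply/eqP => e; move: hirk hi; rewrite e mul0n addn0 => ->; rewrite ltnn.
have rpp : (r < pp.-1)%N.
  by rewrite -(ltn_pmul2r k0) hpk -hirk -{1}[(r * k)%N]add0n ltn_add2r.
pose j := (pp.-1 - r)%N.
have ij : i = (j * k)%N by rewrite /j mulnBl hpk -hirk addnK.
have jpp : (j < pp)%N by rewrite /j; apply: leq_ltn_trans (leq_subr _ _) _; rewrite ltn_predL ltnW.
pose nu := alpha x2 / alpha x1.
pose x' := c - nu *: cpow a j.
have nx' : ~ exact x' by apply: hc.
have cx' : cocycle i x' by apply: cocB => //; apply: cocZ; rewrite ij; apply: coc_cpow.
have ex'r : exact (mul A x' (cpow a r)).
  rewrite /x' (mulBx hA) (mulZx hA) cpowD.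
  have -> : (j + r)%N = pp.-1 by rewrite /j subnK // ltnW.
  rewrite hirk in cx2; exact: top_prop.
case: (step x' i ipos cx' nx') => r' [nx3 [ex3 r'min]].
have r'r : (r' < r)%N by rewrite -(prednK r0) ltnS; apply: r'min; rewrite prednK.
apply: (final (mul A x' (cpow a r')) (i + r' * k)%N) => //.
- by rewrite addn_gt0 ipos.
- by rewrite -hirk ltn_add2l ltn_pmul2r.
- by apply: (cocycle_mul hA cx'); apply: coc_cpow.
Qed.

End Th.

Theorem theorem3p9 (K : fieldType) (charK0 : [pchar K] =i pred0)
  (A : rcdga K) (n : nat) (n_gt0 : (0 < n)%N)
  (hA : is_cdga A) (alpha : A -> K) (hP : Poincare_class A (2 * n) alpha)
  (hformal : formal A) (hconn : connected A)
  (omega : A) (homega : cocycle (2 * n) omega) (homega1 : alpha omega = 1)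
  (hformal_theta : formal (A_theta n omega)) :
  cohom_truncated_poly A.
Proof.
have omega_nex : ~ exact omega.
  case=> c hc; case: hP => [_ [Pdif _]].
  have := Pdif c; rewrite -hc => /(_ homega.1); rewrite homega1 => /eqP; rewrite oner_eq0.
  by [].
exact: (main_thm n_gt0 hA homega omega_nex hconn hP homega1 (formal_MP0 hformal_theta)).
Qed.
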